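(* Let $w\in\{a,b\}^*$ (with $a\neq b$) satisfy $l(w)\ge 9$. Then there exists an element of $\mathtt{BR}(w)$ that is not rich.
   Context: For a word $w=w_1\cdots w_n$, $w^R=w_n\cdots w_1$; $w$ is a palindrome if $w=w^R$; a factor of $w$ is a word $u$ with $w=puq$. A word $w$ is rich if the number of distinct nonempty palindromic factors of $w$ equals $|w|$. The block reversal of a nonempty word $w$ is $\mathtt{BR}(w)=\{B_t\cdots B_1 : w=B_1\cdots B_t,\ t\ge1,\ \text{each } B_i \text{ nonempty}\}$. Every nonempty word has a unique run-length encoding $w=c_1^{n_1}\cdots c_k^{n_k}$ with letters $c_i\neq c_{i+1}$ and $n_i\ge1$; $l(w)=k$ is the length of its run sequence. *)

(* Defs.v *)
From mathcomp Require Import all_boot.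
Set Implicit Arguments. Unset Strict Implicit. Unset Printing Implicit Defensive.

Section Words.
Variable T : eqType.

Definition palindrome (w : seq T) : bool := w == rev w.

Definition factor (u w : seq T) : Prop := exists p q, w = p ++ u ++ q.

Definition nonempty_factors (w : seq T) : seq (seq T) :=
  flatten [seq [seq take j (drop i w) | j <- iota 1 (size w - i)]
          | i <- iota 0 (size w)].

Definition num_pal_factors (w : seq T) : nat :=
  size (undup (filter palindrome (nonempty_factors w))).

Definition rich (w : seq T) : bool := num_pal_factors w == size w.

Definition in_BR (v w : seq T) : Prop :=
  exists bs : seq (seq T),
    [/\ bs != [::], all (fun B => B != [::]) bs,
        flatten bs = w & v = flatten (rev bs)].

Fixpoint rle (w : seq T) : seq (T * nat) :=
  match w with
  | [::] => [::]
  | x :: w' =>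
      match rle w' with
      | (y, n) :: r => if x == y then (y, n.+1) :: r else (x, 1) :: (y, n) :: r
      | [::] => [:: (x, 1)]
      end
  end.

Definition run_len (w : seq T) : nat := size (rle w).

End Words.

(* Main.v *)
Require Import Defs.
From mathcomp Require Import all_boot zify.
Set Implicit Arguments. Unset Strict Implicit. Unset Printing Implicit Defensive.

Section Gen.
Variable T : eqType.
Implicit Types (u w s p q : seq T).

Lemma mem_nef s w : (s \in nonempty_factors w) = (s != [::]) && infix s w.
Proof.
apply/idP/idP.
- rewrite /nonempty_factors => /flattenP [l /mapP [i]].
  rewrite mem_iota add0n => /andP [_ iw] -> /mapP [j].
  rewrite mem_iota => /andP [j1 j2] ->.
  apply/andP; split.
    rewrite -size_eq0 size_take size_drop.
    by case: ifP => _; rewrite -lt0n // subn_gt0.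
  apply/infixP; exists (take i w), (drop j (drop i w)).
  by rewrite cat_take_drop cat_take_drop.
- case/andP => ne /infixP [p [q ->]].
  have sz : 0 < size s by rewrite lt0n size_eq0.
  rewrite /nonempty_factors; apply/flattenP.
  exists [seq take j (drop (size p) (p ++ s ++ q)) | j <- iota 1 (size (p ++ s ++ q) - size p)].
    apply/mapP; exists (size p) => //.
    rewrite mem_iota add0n /= !size_cat; lia.
  apply/mapP; exists (size s).
    rewrite mem_iota !size_cat; lia.
  by rewrite drop_size_cat // take_size_cat.
Qed.

Definition PF w := filter (@palindrome T) (nonempty_factors w).

Lemma mem_PF s w : (s \in PF w) = [&& palindrome s, s != [::] & infix s w].
Proof. by rewrite mem_filter mem_nef. Qed.

Lemma npf_PF w : num_pal_factors w = size (undup (PF w)).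
Proof. by []. Qed.

Lemma undup_size_le (l1 l2 : seq (seq T)) :
  {subset l1 <= l2} -> size (undup l1) <= size (undup l2).
Proof.
move=> sub; apply: uniq_leq_size; first exact: undup_uniq.
by move=> x; rewrite !mem_undup; apply: sub.
Qed.

Lemma pal_rev s : palindrome (rev s) = palindrome s.
Proof.
by rewrite /palindrome revK eq_sym.
Qed.

Lemma npf_rev w : num_pal_factors (rev w) = num_pal_factors w.
Proof.
rewrite !npf_PF; apply/eqP; rewrite eqn_leq; apply/andP; split;
  apply: undup_size_le => s; rewrite !mem_PF => /and3P [ps ne inf];
  rewrite ps ne /=; move: (ps); rewrite /palindrome => /eqP e.
- by rewrite e -infix_rev revK.
- by rewrite e infix_rev.
Qed.

Lemma suffix_size_eq s1 s2 w : suffix s1 w -> suffix s2 w -> size s1 = size s2 -> s1 = s2.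
Proof.
move=> /suffixP [p1 e1] /suffixP [p2 e2] sz.
have : size p1 = size p2.
  by apply/eqP; rewrite -(eqn_add2r (size s1)) -size_cat -e1 sz -size_cat -e2.
move=> hp.
move: e1; rewrite e2 => /eqP; rewrite eqseq_cat // => /andP [_ /eqP] //.
Qed.

Lemma prefix_le a b w : prefix a w -> prefix b w -> size a <= size b -> prefix a b.
Proof.
rewrite !prefixE => /eqP ea /eqP eb le.
by rewrite -eb take_takel // ea.
Qed.

Lemma suffix_le a b w : suffix a w -> suffix b w -> size a <= size b -> suffix a b.
Proof.
rewrite -!prefix_rev => ha hb le; apply: prefix_le ha hb _; by rewrite !size_rev.
Qed.

Lemma new_unique x u s1 s2 :
  palindrome s1 -> palindrome s2 ->
  suffix s1 (rcons u x) -> suffix s2 (rcons u x) ->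
  ~~ infix s1 u -> ~~ infix s2 u -> s1 = s2.
Proof.
wlog le : s1 s2 / size s1 <= size s2.
  move=> H p1 p2 f1 f2 n1 n2; case: (leqP (size s1) (size s2)) => h.
    exact: H.
  by apply/esym; apply: H => //; apply: ltnW.
move=> p1 p2 f1 f2 n1 n2.
have s12 : suffix s1 s2 := suffix_le f1 f2 le.
have := suffix_le f2 f1.
case: (ltngtP (size s1) (size s2)) le => // lt _; last first.
  by move=> _; apply: (suffix_size_eq f1 f2 lt).
move=> _; exfalso.
have pre : prefix s1 s2.
  move: p1 p2; rewrite /palindrome => /eqP e1 /eqP e2.
  by rewrite e1 e2 prefix_rev.
move: pre => /prefixP [t et].
case/lastP: t et => [|t y] et.
  by move: lt; rewrite et cats0 ltnn.
move: f2 => /suffixP [q e].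
move/negP: n1; apply; apply/infixP; exists q, t.
move: e; rewrite et -rcons_cat -rcons_cat => /eqP; rewrite eqseq_rcons => /andP [/eqP -> _].
by rewrite catA.
Qed.

Lemma npf_rcons u x : num_pal_factors (rcons u x) <= (num_pal_factors u).+1.
Proof.
rewrite !npf_PF.
set L := undup (PF (rcons u x)).
have uL : uniq L by apply: undup_uniq.
rewrite -(count_predC (mem (PF u)) L).
have h1 : count (mem (PF u)) L <= size (undup (PF u)).
  rewrite -size_filter; apply: uniq_leq_size; first by apply: filter_uniq.
  by move=> z; rewrite mem_filter mem_undup => /andP [].
have h2 : count (predC (mem (PF u))) L <= 1.
  rewrite -size_filter.
  set N := filter _ L.
  have uN : uniq N by apply: filter_uniq.
  case eN: N uN => [|s1 [|s2 N']] //= uN.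
  have m1 : s1 \in N by rewrite eN mem_head.
  have m2 : s2 \in N by rewrite eN !inE eqxx orbT.
  move: m1 m2; rewrite !mem_filter /= !mem_undup !mem_PF.
  move=> /andP [n1 /and3P [p1 ne1 i1]] /andP [n2 /and3P [p2 ne2 i2]].
  move: n1 n2; rewrite p1 p2 ne1 ne2 /= => n1 n2.
  move: i1 i2; rewrite !infix_rconsl (negbTE n1) (negbTE n2) !orbF => f1 f2.
  move: uN; rewrite inE (new_unique p1 p2 f1 f2 n1 n2) eqxx //.
by rewrite -addn1 leq_add.
Qed.


Lemma npf_catr u q : num_pal_factors (u ++ q) <= num_pal_factors u + size q.
Proof.
elim: q u => [|x q IH] u; first by rewrite cats0 addn0.
rewrite -cat_rcons; apply: leq_trans (IH _) _.
by rewrite /= addnS -addSn leq_add2r npf_rcons.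
Qed.

Lemma npf_catl p u : num_pal_factors (p ++ u) <= num_pal_factors u + size p.
Proof.
rewrite -npf_rev rev_cat -(npf_rev u) -(size_rev p); exact: npf_catr.
Qed.

Lemma not_rich_inf p u q : num_pal_factors u < size u -> ~~ rich (p ++ u ++ q).
Proof.
move=> h; rewrite /rich; apply/negP => /eqP e.
have := npf_catl p (u ++ q); have := npf_catr u q.
rewrite e !size_cat; lia.
Qed.

End Gen.

Lemma nef_map (T1 T2 : eqType) (f : T1 -> T2) (w : seq T1) :
  nonempty_factors (map f w) = map (map f) (nonempty_factors w).
Proof.
rewrite /nonempty_factors map_flatten -map_comp size_map; congr flatten.
apply: eq_map => i /=; rewrite -map_comp; apply: eq_map => j /=.
by rewrite map_take map_drop.
Qed.

Lemma npf_map (T1 T2 : eqType) (f : T1 -> T2) (w : seq T1) :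
  injective f -> num_pal_factors (map f w) = num_pal_factors w.
Proof.
move=> fi; rewrite /num_pal_factors nef_map filter_map.
have mi : injective (map f) by apply: inj_map.
rewrite undup_map_inj // size_map; congr (size (undup _)); apply: eq_filter => s /=.
by rewrite /palindrome -map_rev (inj_eq mi).
Qed.

Section Core.
Variable T : eqType.

Definition Wd (c d : T) n1 n2 n3 n4 n5 n6 n7 n8 n9 :=
  nseq n1.+1 c ++ nseq n2.+1 d ++ nseq n3.+1 c ++ nseq n4.+1 d ++ nseq n5.+1 c ++
  nseq n6.+1 d ++ nseq n7.+1 c ++ nseq n8.+1 d ++ nseq n9.+1 c.

Definition fb (c d : T) (x : bool) := if x then c else d.

Definition core_goal (c d : T) n1 n2 n3 n4 n5 n6 n7 n8 n9 :=
  exists (A Y G1 G2 X B : seq T) (bl : seq (seq T)) (ub : seq bool),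
  [/\ Wd c d n1 n2 n3 n4 n5 n6 n7 n8 n9 = A ++ Y ++ G1 ++ flatten bl ++ G2 ++ X ++ B,
      Y != [::], all (fun B => B != [::]) bl,
      X ++ flatten (rev bl) ++ Y = map (fb c d) ub &
      num_pal_factors ub < size ub].

Lemma nseqSr n (x : T) : nseq n.+1 x = nseq n x ++ [:: x].
Proof. by rewrite -addn1 nseqD. Qed.

Lemma nseq_gen k1 k2 m (x : T) : nseq (k1 + m + k2) x = nseq k1 x ++ nseq m x ++ nseq k2 x.
Proof. by rewrite !nseqD catA. Qed.

Lemma nseq_split03 m (x : T) : nseq m.+3 x = nseq 0 x ++ nseq m x ++ nseq 3 x.
Proof. by rewrite -nseq_gen; congr nseq; lia. Qed.
Lemma nseq_split12 m (x : T) : nseq m.+3 x = nseq 1 x ++ nseq m x ++ nseq 2 x.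
Proof. by rewrite -nseq_gen; congr nseq; lia. Qed.
Lemma nseq_split21 m (x : T) : nseq m.+3 x = nseq 2 x ++ nseq m x ++ nseq 1 x.
Proof. by rewrite -nseq_gen; congr nseq; lia. Qed.
Lemma nseq_split30 m (x : T) : nseq m.+3 x = nseq 3 x ++ nseq m x ++ nseq 0 x.
Proof. by rewrite -nseq_gen; congr nseq; lia. Qed.

Ltac norm := rewrite -!catA /=; rewrite -?catA /=.

Lemma leaf0 (c d : T) (n1 n8 n9 : nat) : core_goal c d n1 (0) (0) (0) (0) (0) (0) n8 n9.
Proof.
exists (nseq n1 c), ([:: c]), ([::]), (nseq n8 d ++ [:: d]), ([:: c]), (nseq n9 c), [:: [:: d; c]; [:: d]; [:: c; d; c]], [:: true; true; false; true; false; false; true; true].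
split; [ rewrite /Wd (nseqSr n1) (nseqSr n8); by norm | by [] | by [] | by [] | by [] ].
Qed.

Lemma leaf1 (c d : T) (n1 n8 n9 : nat) : core_goal c d n1 (0) (0) (0) (0) (1) (0) n8 n9.
Proof.
exists ((nseq (n1).+1 c)), ([:: d]), ([::]), ([::]), ([:: d] ++ [:: d] ++ [:: c] ++ [:: d]), (nseq n8 d ++ (nseq (n9).+1 c)), [:: [:: c; d]; [:: c]], [:: false; false; true; false; true; true; false; false].
split; [ rewrite /Wd; by norm | by [] | by [] | by [] | by [] ].
Qed.

Lemma leaf2 (c d : T) (n1 m6 n8 n9 : nat) : core_goal c d n1 (0) (0) (0) (0) (m6.+2) (0) n8 n9.
Proof.
exists ((nseq (n1).+1 c)), ([:: d]), ([::]), (nseq m6 d), ([:: d] ++ [:: d] ++ [:: c]), ((nseq (n8).+1 d) ++ (nseq (n9).+1 c)), [:: [:: c; d; c; d]], [:: false; false; true; true; false; true; false; false].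
split; [ rewrite /Wd (nseq_split12 m6); by norm | by [] | by [] | by [] | by [] ].
Qed.

Lemma leaf3 (c d : T) (n1 n6 n8 n9 : nat) : core_goal c d n1 (0) (0) (0) (0) n6 (1) n8 n9.
Proof.
exists (nseq n1 c), ([:: c]), ([::]), (nseq n6 d ++ [:: d]), ([:: c] ++ [:: c] ++ [:: d]), (nseq n8 d ++ (nseq (n9).+1 c)), [:: [:: d; c; d; c]], [:: true; true; false; false; true; false; true; true].
split; [ rewrite /Wd (nseqSr n1) (nseqSr n6); by norm | by [] | by [] | by [] | by [] ].
Qed.

Lemma leaf4 (c d : T) (n1 n6 m7 n8 n9 : nat) : core_goal c d n1 (0) (0) (0) (0) n6 (m7.+2) n8 n9.
Proof.
exists (nseq n1 c), ([:: c]), ([::]), (nseq n6 d ++ [:: d] ++ nseq m7 c ++ [:: c]), ([:: c] ++ [:: c] ++ [:: d]), (nseq n8 d ++ (nseq (n9).+1 c)), [:: [:: d; c; d; c]], [:: true; true; false; false; true; false; true; true].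
split; [ rewrite /Wd (nseqSr n1) (nseqSr n6) (nseq_split03 m7); by norm | by [] | by [] | by [] | by [] ].
Qed.

Lemma leaf5 (c d : T) (n1 n7 n8 n9 : nat) : core_goal c d n1 (0) (0) (0) (1) (0) n7 n8 n9.
Proof.
exists (nseq n1 c), ([:: c]), ([::]), ([::]), ([:: c] ++ [:: c] ++ [:: d] ++ [:: c]), (nseq n7 c ++ (nseq (n8).+1 d) ++ (nseq (n9).+1 c)), [:: [:: d; c]; [:: d]], [:: true; true; false; true; false; false; true; true].
split; [ rewrite /Wd (nseqSr n1); by norm | by [] | by [] | by [] | by [] ].
Qed.

Lemma leaf6 (c d : T) (n1 n7 n8 n9 : nat) : core_goal c d n1 (0) (0) (0) (1) (1) n7 n8 n9.
Proof.
exists (nseq n1 c), ([:: c]), ([::]), ([:: d]), ([:: c] ++ [:: c] ++ [:: d] ++ [:: d] ++ [:: c]), (nseq n7 c ++ (nseq (n8).+1 d) ++ (nseq (n9).+1 c)), [:: [:: d; c]], [:: true; true; false; false; true; false; true; true].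
split; [ rewrite /Wd (nseqSr n1); by norm | by [] | by [] | by [] | by [] ].
Qed.

Lemma leaf7 (c d : T) (n1 m6 n7 n8 n9 : nat) : core_goal c d n1 (0) (0) (0) (1) (m6.+2) n7 n8 n9.
Proof.
exists ((nseq (n1).+1 c)), ([:: d]), ([::]), ([::]), ([:: d] ++ [:: d]), (nseq m6 d ++ (nseq (n7).+1 c) ++ (nseq (n8).+1 d) ++ (nseq (n9).+1 c)), [:: [:: c; d; c; c; d]], [:: false; false; true; false; true; true; false; false].
split; [ rewrite /Wd (nseq_split30 m6); by norm | by [] | by [] | by [] | by [] ].
Qed.

Lemma leaf8 (c d : T) (n1 m5 n6 n7 n8 n9 : nat) : core_goal c d n1 (0) (0) (0) (m5.+2) n6 n7 n8 n9.
Proof.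
exists (nseq n1 c), ([:: c]), ([::]), (nseq m5 c), ([:: c] ++ [:: c] ++ [:: d]), (nseq n6 d ++ (nseq (n7).+1 c) ++ (nseq (n8).+1 d) ++ (nseq (n9).+1 c)), [:: [:: d; c; d; c]], [:: true; true; false; false; true; false; true; true].
split; [ rewrite /Wd (nseqSr n1) (nseq_split12 m5); by norm | by [] | by [] | by [] | by [] ].
Qed.

Lemma leaf9 (c d : T) (n1 n7 n8 n9 : nat) : core_goal c d n1 (0) (0) (1) (0) (0) n7 n8 n9.
Proof.
exists (nseq n1 c), ([:: c] ++ [:: d] ++ [:: c] ++ [:: d] ++ [:: d]), ([::]), (nseq n7 c ++ [:: c]), ([:: d]), (nseq n8 d ++ (nseq (n9).+1 c)), [:: [:: c]; [:: d]], [:: false; false; true; true; false; true; false; false].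
split; [ rewrite /Wd (nseqSr n1) (nseqSr n7); by norm | by [] | by [] | by [] | by [] ].
Qed.

Lemma leaf10 (c d : T) (n1 n7 n8 n9 : nat) : core_goal c d n1 (0) (0) (1) (0) (1) n7 n8 n9.
Proof.
exists ((nseq (n1).+1 c)), ([:: d]), ([::]), ([::]), ([:: d] ++ [:: d] ++ [:: c]), (nseq n7 c ++ (nseq (n8).+1 d) ++ (nseq (n9).+1 c)), [:: [:: c; d]; [:: d; c]], [:: false; false; true; false; true; true; false; false].
split; [ rewrite /Wd; by norm | by [] | by [] | by [] | by [] ].
Qed.

Lemma leaf11 (c d : T) (n1 m6 n7 n8 n9 : nat) : core_goal c d n1 (0) (0) (1) (0) (m6.+2) n7 n8 n9.
Proof.
exists ((nseq (n1).+1 c) ++ (nseq (0).+1 d)), ([:: c] ++ [:: d] ++ [:: d]), ([::]), (nseq m6 d), ([:: d] ++ [:: d] ++ [:: c]), (nseq n7 c ++ (nseq (n8).+1 d) ++ (nseq (n9).+1 c)), [:: [:: c; d]], [:: false; false; true; true; false; true; false; false].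
split; [ rewrite /Wd (nseq_split12 m6); by norm | by [] | by [] | by [] | by [] ].
Qed.

Lemma leaf12 (c d : T) (n1 n6 n7 n8 n9 : nat) : core_goal c d n1 (0) (0) (1) (1) n6 n7 n8 n9.
Proof.
exists (nseq n1 c), ([:: c]), ([::]), (nseq n6 d ++ [:: d]), ([:: c]), (nseq n7 c ++ (nseq (n8).+1 d) ++ (nseq (n9).+1 c)), [:: [:: d; c; d; d; c]; [:: c]], [:: true; true; false; true; false; false; true; true].
split; [ rewrite /Wd (nseqSr n1) (nseqSr n6); by norm | by [] | by [] | by [] | by [] ].
Qed.

Lemma leaf13 (c d : T) (n1 m5 n6 n7 n8 n9 : nat) : core_goal c d n1 (0) (0) (1) (m5.+2) n6 n7 n8 n9.
Proof.
exists (nseq n1 c), ([:: c]), ([::]), ([::]), ([:: c] ++ [:: c]), (nseq m5 c ++ (nseq (n6).+1 d) ++ (nseq (n7).+1 c) ++ (nseq (n8).+1 d) ++ (nseq (n9).+1 c)), [:: [:: d; c; d; d; c]], [:: true; true; false; true; false; false; true; true].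
split; [ rewrite /Wd (nseqSr n1) (nseq_split30 m5); by norm | by [] | by [] | by [] | by [] ].
Qed.

Lemma leaf14 (c d : T) (n1 m4 n6 n7 n8 n9 : nat) : core_goal c d n1 (0) (0) (m4.+2) (0) n6 n7 n8 n9.
Proof.
exists (nseq n1 c), ([:: c] ++ [:: d] ++ [:: c] ++ [:: d] ++ [:: d]), (nseq m4 d), ([::]), ([:: d]), (nseq n6 d ++ (nseq (n7).+1 c) ++ (nseq (n8).+1 d) ++ (nseq (n9).+1 c)), [:: [:: d; c]], [:: false; false; true; true; false; true; false; false].
split; [ rewrite /Wd (nseqSr n1) (nseq_split21 m4); by norm | by [] | by [] | by [] | by [] ].
Qed.

Lemma leaf15 (c d : T) (n1 m4 n6 n7 n8 n9 : nat) : core_goal c d n1 (0) (0) (m4.+2) (1) n6 n7 n8 n9.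
Proof.
exists ((nseq (n1).+1 c)), ([:: d]), ([::]), (nseq m4 d), ([:: d] ++ [:: d] ++ [:: c] ++ [:: c] ++ [:: d]), (nseq n6 d ++ (nseq (n7).+1 c) ++ (nseq (n8).+1 d) ++ (nseq (n9).+1 c)), [:: [:: c; d]], [:: false; false; true; true; false; true; false; false].
split; [ rewrite /Wd (nseq_split12 m4); by norm | by [] | by [] | by [] | by [] ].
Qed.

Lemma leaf16 (c d : T) (n1 m4 m5 n6 n7 n8 n9 : nat) : core_goal c d n1 (0) (0) (m4.+2) (m5.+2) n6 n7 n8 n9.
Proof.
exists ((nseq (n1).+1 c)), ([:: d] ++ [:: c] ++ [:: d] ++ [:: d]), (nseq m4 d), (nseq m5 c), ([:: c] ++ [:: d]), (nseq n6 d ++ (nseq (n7).+1 c) ++ (nseq (n8).+1 d) ++ (nseq (n9).+1 c)), [:: [:: d; c; c]], [:: true; false; false; true; true; false; true; false; false].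
split; [ rewrite /Wd (nseq_split21 m4) (nseq_split21 m5); by norm | by [] | by [] | by [] | by [] ].
Qed.

Lemma leaf17 (c d : T) (n1 n7 n8 n9 : nat) : core_goal c d n1 (0) (1) (0) (0) (0) n7 n8 n9.
Proof.
exists (nseq n1 c), ([:: c]), ([::]), ([::]), ([:: c]), (nseq n7 c ++ (nseq (n8).+1 d) ++ (nseq (n9).+1 c)), [:: [:: d; c]; [:: c; d; c; d]], [:: true; true; false; true; false; false; true; true].
split; [ rewrite /Wd (nseqSr n1); by norm | by [] | by [] | by [] | by [] ].
Qed.

Lemma leaf18 (c d : T) (n1 n7 n8 n9 : nat) : core_goal c d n1 (0) (1) (0) (0) (1) n7 n8 n9.
Proof.
exists (nseq n1 c), ([:: c]), ([::]), ([:: d]), ([:: c] ++ [:: c] ++ [:: d] ++ [:: c] ++ [:: d] ++ [:: d] ++ [:: c]), (nseq n7 c ++ (nseq (n8).+1 d) ++ (nseq (n9).+1 c)), [::], [:: true; true; false; true; false; false; true; true].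
split; [ rewrite /Wd (nseqSr n1); by norm | by [] | by [] | by [] | by [] ].
Qed.

Lemma leaf19 (c d : T) (n1 m6 n7 n8 n9 : nat) : core_goal c d n1 (0) (1) (0) (0) (m6.+2) n7 n8 n9.
Proof.
exists ((nseq (n1).+1 c)), ([:: d]), ([::]), ([::]), ([:: d] ++ [:: d]), (nseq m6 d ++ (nseq (n7).+1 c) ++ (nseq (n8).+1 d) ++ (nseq (n9).+1 c)), [:: [:: c; c; d; c; d]], [:: false; false; true; true; false; true; false; false].
split; [ rewrite /Wd (nseq_split30 m6); by norm | by [] | by [] | by [] | by [] ].
Qed.

Lemma leaf20 (c d : T) (n1 n6 n7 n8 n9 : nat) : core_goal c d n1 (0) (1) (0) (1) n6 n7 n8 n9.
Proof.
exists (nseq n1 c), ([:: c]), ([::]), ([::]), ([:: c] ++ [:: c] ++ [:: d]), (nseq n6 d ++ (nseq (n7).+1 c) ++ (nseq (n8).+1 d) ++ (nseq (n9).+1 c)), [:: [:: d; c]; [:: c; d]], [:: true; true; false; true; false; false; true; true].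
split; [ rewrite /Wd (nseqSr n1); by norm | by [] | by [] | by [] | by [] ].
Qed.

Lemma leaf21 (c d : T) (n1 m5 n6 n7 n8 n9 : nat) : core_goal c d n1 (0) (1) (0) (m5.+2) n6 n7 n8 n9.
Proof.
exists ((nseq (n1).+1 c)), ([:: d] ++ [:: c] ++ [:: c]), ([::]), (nseq m5 c), ([:: c] ++ [:: c] ++ [:: d]), (nseq n6 d ++ (nseq (n7).+1 c) ++ (nseq (n8).+1 d) ++ (nseq (n9).+1 c)), [:: [:: d; c]], [:: true; true; false; false; true; false; true; true].
split; [ rewrite /Wd (nseq_split12 m5); by norm | by [] | by [] | by [] | by [] ].
Qed.

Lemma leaf22 (c d : T) (n1 n6 n7 n8 n9 : nat) : core_goal c d n1 (0) (1) (1) (0) n6 n7 n8 n9.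
Proof.
exists (nseq n1 c), ([:: c]), ([::]), (nseq n6 d ++ [:: d]), ([:: c]), (nseq n7 c ++ (nseq (n8).+1 d) ++ (nseq (n9).+1 c)), [:: [:: d; c]; [:: c; d; d; c]], [:: true; true; false; false; true; false; true; true].
split; [ rewrite /Wd (nseqSr n1) (nseqSr n6); by norm | by [] | by [] | by [] | by [] ].
Qed.

Lemma leaf23 (c d : T) (n1 n6 n7 n8 n9 : nat) : core_goal c d n1 (0) (1) (1) (1) n6 n7 n8 n9.
Proof.
exists (nseq n1 c), ([:: c]), ([::]), ([::]), ([:: c] ++ [:: c]), ((nseq (n6).+1 d) ++ (nseq (n7).+1 c) ++ (nseq (n8).+1 d) ++ (nseq (n9).+1 c)), [:: [:: d; c]; [:: c]; [:: d; d]], [:: true; true; false; false; true; false; true; true].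
split; [ rewrite /Wd (nseqSr n1); by norm | by [] | by [] | by [] | by [] ].
Qed.

Lemma leaf24 (c d : T) (n1 m5 n6 n7 n8 n9 : nat) : core_goal c d n1 (0) (1) (1) (m5.+2) n6 n7 n8 n9.
Proof.
exists ((nseq (n1).+1 c) ++ (nseq (0).+1 d)), ([:: c]), ([::]), (nseq m5 c), ([:: c] ++ [:: c] ++ [:: d]), (nseq n6 d ++ (nseq (n7).+1 c) ++ (nseq (n8).+1 d) ++ (nseq (n9).+1 c)), [:: [:: c; d; d; c]], [:: true; true; false; true; false; false; true; true].
split; [ rewrite /Wd (nseq_split12 m5); by norm | by [] | by [] | by [] | by [] ].
Qed.

Lemma leaf25 (c d : T) (n1 m4 n5 n6 n7 n8 n9 : nat) : core_goal c d n1 (0) (1) (m4.+2) n5 n6 n7 n8 n9.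
Proof.
exists (nseq n1 c), ([:: c] ++ [:: d] ++ [:: c] ++ [:: c] ++ [:: d] ++ [:: d]), (nseq m4 d), (nseq n5 c ++ [:: c]), ([:: d]), (nseq n6 d ++ (nseq (n7).+1 c) ++ (nseq (n8).+1 d) ++ (nseq (n9).+1 c)), [:: [:: d]], [:: false; false; true; false; true; true; false; false].
split; [ rewrite /Wd (nseqSr n1) (nseq_split21 m4) (nseqSr n5); by norm | by [] | by [] | by [] | by [] ].
Qed.

Lemma leaf26 (c d : T) (n1 m3 n6 n7 n8 n9 : nat) : core_goal c d n1 (0) (m3.+2) (0) (0) n6 n7 n8 n9.
Proof.
exists (nseq n1 c), ([:: c]), ([::]), (nseq m3 c), ([:: c] ++ [:: c] ++ [:: d] ++ [:: c] ++ [:: d]), (nseq n6 d ++ (nseq (n7).+1 c) ++ (nseq (n8).+1 d) ++ (nseq (n9).+1 c)), [:: [:: d; c]], [:: true; true; false; true; false; false; true; true].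
split; [ rewrite /Wd (nseqSr n1) (nseq_split12 m3); by norm | by [] | by [] | by [] | by [] ].
Qed.

Lemma leaf27 (c d : T) (n1 m3 n6 n7 n8 n9 : nat) : core_goal c d n1 (0) (m3.+2) (0) (1) n6 n7 n8 n9.
Proof.
exists ((nseq (n1).+1 c)), ([:: d] ++ [:: c] ++ [:: c]), (nseq m3 c), ([::]), ([:: c] ++ [:: c] ++ [:: d]), (nseq n6 d ++ (nseq (n7).+1 c) ++ (nseq (n8).+1 d) ++ (nseq (n9).+1 c)), [:: [:: c; d]], [:: true; true; false; true; false; false; true; true].
split; [ rewrite /Wd (nseq_split21 m3); by norm | by [] | by [] | by [] | by [] ].
Qed.

Lemma leaf28 (c d : T) (n1 m3 m5 n6 n7 n8 n9 : nat) : core_goal c d n1 (0) (m3.+2) (0) (m5.+2) n6 n7 n8 n9.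
Proof.
exists ((nseq (n1).+1 c)), ([:: d] ++ [:: c] ++ [:: c]), (nseq m3 c), (nseq m5 c ++ [:: c]), ([:: c] ++ [:: c] ++ [:: d]), (nseq n6 d ++ (nseq (n7).+1 c) ++ (nseq (n8).+1 d) ++ (nseq (n9).+1 c)), [:: [:: c; d]], [:: true; true; false; true; false; false; true; true].
split; [ rewrite /Wd (nseq_split21 m3) (nseq_split03 m5); by norm | by [] | by [] | by [] | by [] ].
Qed.

Lemma leaf29 (c d : T) (n1 m3 n5 n6 n7 n8 n9 : nat) : core_goal c d n1 (0) (m3.+2) (1) n5 n6 n7 n8 n9.
Proof.
exists (nseq n1 c), ([:: c]), ([::]), (nseq m3 c), ([:: c] ++ [:: c] ++ [:: d] ++ [:: d] ++ [:: c]), (nseq n5 c ++ (nseq (n6).+1 d) ++ (nseq (n7).+1 c) ++ (nseq (n8).+1 d) ++ (nseq (n9).+1 c)), [:: [:: d; c]], [:: true; true; false; false; true; false; true; true].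
split; [ rewrite /Wd (nseqSr n1) (nseq_split12 m3); by norm | by [] | by [] | by [] | by [] ].
Qed.

Lemma leaf30 (c d : T) (n1 m3 m4 n5 n6 n7 n8 n9 : nat) : core_goal c d n1 (0) (m3.+2) (m4.+2) n5 n6 n7 n8 n9.
Proof.
exists (nseq n1 c), ([:: c] ++ [:: d] ++ [:: c] ++ [:: c]), (nseq m3 c), (nseq m4 d), ([:: d] ++ [:: c]), (nseq n5 c ++ (nseq (n6).+1 d) ++ (nseq (n7).+1 c) ++ (nseq (n8).+1 d) ++ (nseq (n9).+1 c)), [:: [:: c; d; d]], [:: false; true; true; false; false; true; false; true; true].
split; [ rewrite /Wd (nseqSr n1) (nseq_split21 m3) (nseq_split21 m4); by norm | by [] | by [] | by [] | by [] ].
Qed.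

Lemma leaf31 (c d : T) (n1 n7 n8 n9 : nat) : core_goal c d n1 (1) (0) (0) (0) (0) n7 n8 n9.
Proof.
exists (nseq n1 c), ([:: c] ++ [:: d] ++ [:: d]), ([::]), (nseq n7 c ++ [:: c]), ([:: d]), (nseq n8 d ++ (nseq (n9).+1 c)), [:: [:: c]; [:: d; c; d]], [:: false; false; true; false; true; true; false; false].
split; [ rewrite /Wd (nseqSr n1) (nseqSr n7); by norm | by [] | by [] | by [] | by [] ].
Qed.

Lemma leaf32 (c d : T) (n1 n7 n8 n9 : nat) : core_goal c d n1 (1) (0) (0) (0) (1) n7 n8 n9.
Proof.
exists ((nseq (n1).+1 c)), ([:: d]), ([::]), ([::]), ([:: d] ++ [:: d] ++ [:: c]), (nseq n7 c ++ (nseq (n8).+1 d) ++ (nseq (n9).+1 c)), [:: [:: d]; [:: c; d; c]], [:: false; false; true; true; false; true; false; false].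
split; [ rewrite /Wd; by norm | by [] | by [] | by [] | by [] ].
Qed.

Lemma leaf33 (c d : T) (n1 m6 n7 n8 n9 : nat) : core_goal c d n1 (1) (0) (0) (0) (m6.+2) n7 n8 n9.
Proof.
exists ((nseq (n1).+1 c) ++ [:: d]), ([:: d]), ([::]), (nseq m6 d), ([:: d] ++ [:: d] ++ [:: c]), (nseq n7 c ++ (nseq (n8).+1 d) ++ (nseq (n9).+1 c)), [:: [:: c; d; c; d]], [:: false; false; true; true; false; true; false; false].
split; [ rewrite /Wd (nseq_split12 m6); by norm | by [] | by [] | by [] | by [] ].
Qed.

Lemma leaf34 (c d : T) (n1 n6 n7 n8 n9 : nat) : core_goal c d n1 (1) (0) (0) (1) n6 n7 n8 n9.
Proof.
exists (nseq n1 c), ([:: c]), ([::]), (nseq n6 d ++ [:: d]), ([:: c]), (nseq n7 c ++ (nseq (n8).+1 d) ++ (nseq (n9).+1 c)), [:: [:: d; d; c; d; c]; [:: c]], [:: true; true; false; false; true; false; true; true].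
split; [ rewrite /Wd (nseqSr n1) (nseqSr n6); by norm | by [] | by [] | by [] | by [] ].
Qed.

Lemma leaf35 (c d : T) (n1 m5 n6 n7 n8 n9 : nat) : core_goal c d n1 (1) (0) (0) (m5.+2) n6 n7 n8 n9.
Proof.
exists (nseq n1 c), ([:: c]), ([::]), ([::]), ([:: c] ++ [:: c]), (nseq m5 c ++ (nseq (n6).+1 d) ++ (nseq (n7).+1 c) ++ (nseq (n8).+1 d) ++ (nseq (n9).+1 c)), [:: [:: d; d; c; d; c]], [:: true; true; false; false; true; false; true; true].
split; [ rewrite /Wd (nseqSr n1) (nseq_split30 m5); by norm | by [] | by [] | by [] | by [] ].
Qed.

Lemma leaf36 (c d : T) (n1 n6 n7 n8 n9 : nat) : core_goal c d n1 (1) (0) (1) (0) n6 n7 n8 n9.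
Proof.
exists (nseq n1 c), ([:: c] ++ [:: d] ++ [:: d]), ([::]), ([::]), ([:: d] ++ [:: d] ++ [:: c] ++ [:: d]), (nseq n6 d ++ (nseq (n7).+1 c) ++ (nseq (n8).+1 d) ++ (nseq (n9).+1 c)), [:: [:: c]], [:: false; false; true; false; true; true; false; false].
split; [ rewrite /Wd (nseqSr n1); by norm | by [] | by [] | by [] | by [] ].
Qed.

Lemma leaf37 (c d : T) (n1 n6 n7 n8 n9 : nat) : core_goal c d n1 (1) (0) (1) (1) n6 n7 n8 n9.
Proof.
exists ((nseq (n1).+1 c)), ([:: d]), ([::]), ([::]), ([:: d] ++ [:: d] ++ [:: c] ++ [:: c] ++ [:: d]), (nseq n6 d ++ (nseq (n7).+1 c) ++ (nseq (n8).+1 d) ++ (nseq (n9).+1 c)), [:: [:: d]; [:: c]], [:: false; false; true; true; false; true; false; false].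
split; [ rewrite /Wd; by norm | by [] | by [] | by [] | by [] ].
Qed.

Lemma leaf38 (c d : T) (n1 m5 n6 n7 n8 n9 : nat) : core_goal c d n1 (1) (0) (1) (m5.+2) n6 n7 n8 n9.
Proof.
exists ((nseq (n1).+1 c)), ([:: d]), ([::]), (nseq m5 c), ([:: c] ++ [:: d]), (nseq n6 d ++ (nseq (n7).+1 c) ++ (nseq (n8).+1 d) ++ (nseq (n9).+1 c)), [:: [:: d; c; d]; [:: d; c; c]], [:: true; false; false; true; true; false; true; false; false].
split; [ rewrite /Wd (nseq_split21 m5); by norm | by [] | by [] | by [] | by [] ].
Qed.

Lemma leaf39 (c d : T) (n1 m4 n5 n6 n7 n8 n9 : nat) : core_goal c d n1 (1) (0) (m4.+2) n5 n6 n7 n8 n9.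
Proof.
exists (nseq n1 c), ([:: c] ++ [:: d] ++ [:: d]), ([::]), (nseq m4 d), ([:: d] ++ [:: d] ++ [:: c]), (nseq n5 c ++ (nseq (n6).+1 d) ++ (nseq (n7).+1 c) ++ (nseq (n8).+1 d) ++ (nseq (n9).+1 c)), [:: [:: c; d]], [:: false; false; true; true; false; true; false; false].
split; [ rewrite /Wd (nseqSr n1) (nseq_split12 m4); by norm | by [] | by [] | by [] | by [] ].
Qed.

Lemma leaf40 (c d : T) (n1 n6 n7 n8 n9 : nat) : core_goal c d n1 (1) (1) (0) (0) n6 n7 n8 n9.
Proof.
exists (nseq n1 c), ([:: c]), ([::]), (nseq n6 d ++ [:: d]), ([:: c]), (nseq n7 c ++ (nseq (n8).+1 d) ++ (nseq (n9).+1 c)), [:: [:: d; d; c]; [:: c; d; c]], [:: true; true; false; true; false; false; true; true].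
split; [ rewrite /Wd (nseqSr n1) (nseqSr n6); by norm | by [] | by [] | by [] | by [] ].
Qed.

Lemma leaf41 (c d : T) (n1 n6 n7 n8 n9 : nat) : core_goal c d n1 (1) (1) (0) (1) n6 n7 n8 n9.
Proof.
exists (nseq n1 c), ([:: c]), ([::]), ([::]), ([:: c] ++ [:: c]), ((nseq (n6).+1 d) ++ (nseq (n7).+1 c) ++ (nseq (n8).+1 d) ++ (nseq (n9).+1 c)), [:: [:: d; d; c]; [:: c]; [:: d]], [:: true; true; false; true; false; false; true; true].
split; [ rewrite /Wd (nseqSr n1); by norm | by [] | by [] | by [] | by [] ].
Qed.

Lemma leaf42 (c d : T) (n1 m5 n6 n7 n8 n9 : nat) : core_goal c d n1 (1) (1) (0) (m5.+2) n6 n7 n8 n9.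
Proof.
exists ((nseq (n1).+1 c)), ([:: d] ++ [:: d] ++ [:: c] ++ [:: c]), ([::]), ([::]), ([:: c] ++ [:: c]), (nseq m5 c ++ (nseq (n6).+1 d) ++ (nseq (n7).+1 c) ++ (nseq (n8).+1 d) ++ (nseq (n9).+1 c)), [:: [:: d; c]], [:: true; true; false; true; false; false; true; true].
split; [ rewrite /Wd (nseq_split30 m5); by norm | by [] | by [] | by [] | by [] ].
Qed.

Lemma leaf43 (c d : T) (n1 n5 n6 n7 n8 n9 : nat) : core_goal c d n1 (1) (1) (1) n5 n6 n7 n8 n9.
Proof.
exists (nseq n1 c), ([:: c] ++ [:: d] ++ [:: d]), ([::]), (nseq n5 c ++ [:: c]), ([:: d]), (nseq n6 d ++ (nseq (n7).+1 c) ++ (nseq (n8).+1 d) ++ (nseq (n9).+1 c)), [:: [:: c; c; d]; [:: d]], [:: false; false; true; true; false; true; false; false].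
split; [ rewrite /Wd (nseqSr n1) (nseqSr n5); by norm | by [] | by [] | by [] | by [] ].
Qed.

Lemma leaf44 (c d : T) (n1 m4 n5 n6 n7 n8 n9 : nat) : core_goal c d n1 (1) (1) (m4.+2) n5 n6 n7 n8 n9.
Proof.
exists ((nseq (n1).+1 c)), ([:: d]), ([::]), (nseq m4 d), ([:: d] ++ [:: d] ++ [:: c]), (nseq n5 c ++ (nseq (n6).+1 d) ++ (nseq (n7).+1 c) ++ (nseq (n8).+1 d) ++ (nseq (n9).+1 c)), [:: [:: d; c; c; d]], [:: false; false; true; false; true; true; false; false].
split; [ rewrite /Wd (nseq_split12 m4); by norm | by [] | by [] | by [] | by [] ].
Qed.

Lemma leaf45 (c d : T) (n1 m3 n5 n6 n7 n8 n9 : nat) : core_goal c d n1 (1) (m3.+2) (0) n5 n6 n7 n8 n9.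
Proof.
exists (nseq n1 c), ([:: c]), ([::]), (nseq m3 c), ([:: c] ++ [:: c] ++ [:: d] ++ [:: c]), (nseq n5 c ++ (nseq (n6).+1 d) ++ (nseq (n7).+1 c) ++ (nseq (n8).+1 d) ++ (nseq (n9).+1 c)), [:: [:: d; d; c]], [:: true; true; false; true; false; false; true; true].
split; [ rewrite /Wd (nseqSr n1) (nseq_split12 m3); by norm | by [] | by [] | by [] | by [] ].
Qed.

Lemma leaf46 (c d : T) (n1 m3 n5 n6 n7 n8 n9 : nat) : core_goal c d n1 (1) (m3.+2) (1) n5 n6 n7 n8 n9.
Proof.
exists (nseq n1 c), ([:: c]), ([:: d]), (nseq m3 c), ([:: c] ++ [:: c] ++ [:: d] ++ [:: d] ++ [:: c]), (nseq n5 c ++ (nseq (n6).+1 d) ++ (nseq (n7).+1 c) ++ (nseq (n8).+1 d) ++ (nseq (n9).+1 c)), [:: [:: d; c]], [:: true; true; false; false; true; false; true; true].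
split; [ rewrite /Wd (nseqSr n1) (nseq_split12 m3); by norm | by [] | by [] | by [] | by [] ].
Qed.

Lemma leaf47 (c d : T) (n1 m3 m4 n5 n6 n7 n8 n9 : nat) : core_goal c d n1 (1) (m3.+2) (m4.+2) n5 n6 n7 n8 n9.
Proof.
exists ((nseq (n1).+1 c)), ([:: d] ++ [:: d]), (nseq m3 c ++ [:: c]), (nseq m4 d), ([:: d] ++ [:: d] ++ [:: c]), (nseq n5 c ++ (nseq (n6).+1 d) ++ (nseq (n7).+1 c) ++ (nseq (n8).+1 d) ++ (nseq (n9).+1 c)), [:: [:: c]; [:: c; d]], [:: false; false; true; true; false; true; false; false].
split; [ rewrite /Wd (nseq_split03 m3) (nseq_split12 m4); by norm | by [] | by [] | by [] | by [] ].
Qed.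

Lemma leaf48 (c d : T) (n1 m2 n6 n7 n8 n9 : nat) : core_goal c d n1 (m2.+2) (0) (0) (0) n6 n7 n8 n9.
Proof.
exists (nseq n1 c), ([:: c] ++ [:: d] ++ [:: d]), (nseq m2 d), ([::]), ([:: d]), (nseq n6 d ++ (nseq (n7).+1 c) ++ (nseq (n8).+1 d) ++ (nseq (n9).+1 c)), [:: [:: d; c; d; c]], [:: false; false; true; false; true; true; false; false].
split; [ rewrite /Wd (nseqSr n1) (nseq_split21 m2); by norm | by [] | by [] | by [] | by [] ].
Qed.

Lemma leaf49 (c d : T) (n1 m2 n6 n7 n8 n9 : nat) : core_goal c d n1 (m2.+2) (0) (0) (1) n6 n7 n8 n9.
Proof.
exists ((nseq (n1).+1 c) ++ nseq m2 d), ([:: d]), ([::]), ([::]), ([:: d] ++ [:: d] ++ [:: c] ++ [:: d] ++ [:: c] ++ [:: c] ++ [:: d]), (nseq n6 d ++ (nseq (n7).+1 c) ++ (nseq (n8).+1 d) ++ (nseq (n9).+1 c)), [::], [:: false; false; true; false; true; true; false; false].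
split; [ rewrite /Wd (nseq_split03 m2); by norm | by [] | by [] | by [] | by [] ].
Qed.

Lemma leaf50 (c d : T) (n1 m2 m5 n6 n7 n8 n9 : nat) : core_goal c d n1 (m2.+2) (0) (0) (m5.+2) n6 n7 n8 n9.
Proof.
exists ((nseq (n1).+1 c) ++ nseq m2 d), ([:: d]), ([::]), (nseq m5 c), ([:: c] ++ [:: d]), (nseq n6 d ++ (nseq (n7).+1 c) ++ (nseq (n8).+1 d) ++ (nseq (n9).+1 c)), [:: [:: d]; [:: d; c; d; c; c]], [:: true; false; false; true; false; true; true; false; false].
split; [ rewrite /Wd (nseq_split03 m2) (nseq_split21 m5); by norm | by [] | by [] | by [] | by [] ].
Qed.

Lemma leaf51 (c d : T) (n1 m2 n5 n6 n7 n8 n9 : nat) : core_goal c d n1 (m2.+2) (0) (1) n5 n6 n7 n8 n9.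
Proof.
exists (nseq n1 c), ([:: c] ++ [:: d] ++ [:: d]), (nseq m2 d), ([::]), ([:: d] ++ [:: d] ++ [:: c]), (nseq n5 c ++ (nseq (n6).+1 d) ++ (nseq (n7).+1 c) ++ (nseq (n8).+1 d) ++ (nseq (n9).+1 c)), [:: [:: d; c]], [:: false; false; true; false; true; true; false; false].
split; [ rewrite /Wd (nseqSr n1) (nseq_split21 m2); by norm | by [] | by [] | by [] | by [] ].
Qed.

Lemma leaf52 (c d : T) (n1 m2 m4 n5 n6 n7 n8 n9 : nat) : core_goal c d n1 (m2.+2) (0) (m4.+2) n5 n6 n7 n8 n9.
Proof.
exists (nseq n1 c), ([:: c] ++ [:: d] ++ [:: d]), (nseq m2 d), (nseq m4 d ++ [:: d]), ([:: d] ++ [:: d] ++ [:: c]), (nseq n5 c ++ (nseq (n6).+1 d) ++ (nseq (n7).+1 c) ++ (nseq (n8).+1 d) ++ (nseq (n9).+1 c)), [:: [:: d; c]], [:: false; false; true; false; true; true; false; false].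
split; [ rewrite /Wd (nseqSr n1) (nseq_split21 m2) (nseq_split03 m4); by norm | by [] | by [] | by [] | by [] ].
Qed.

Lemma leaf53 (c d : T) (n1 m2 n5 n6 n7 n8 n9 : nat) : core_goal c d n1 (m2.+2) (1) (0) n5 n6 n7 n8 n9.
Proof.
exists (nseq n1 c), ([:: c] ++ [:: d] ++ [:: d]), (nseq m2 d), (nseq n5 c ++ [:: c]), ([:: d]), (nseq n6 d ++ (nseq (n7).+1 c) ++ (nseq (n8).+1 d) ++ (nseq (n9).+1 c)), [:: [:: d; c; c; d]], [:: false; false; true; true; false; true; false; false].
split; [ rewrite /Wd (nseqSr n1) (nseq_split21 m2) (nseqSr n5); by norm | by [] | by [] | by [] | by [] ].
Qed.

Lemma leaf54 (c d : T) (n1 m2 n5 n6 n7 n8 n9 : nat) : core_goal c d n1 (m2.+2) (1) (1) n5 n6 n7 n8 n9.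
Proof.
exists (nseq n1 c), ([:: c] ++ [:: d] ++ [:: d]), (nseq m2 d), ([::]), ([:: d] ++ [:: d]), ((nseq (n5).+1 c) ++ (nseq (n6).+1 d) ++ (nseq (n7).+1 c) ++ (nseq (n8).+1 d) ++ (nseq (n9).+1 c)), [:: [:: d]; [:: c; c]], [:: false; false; true; true; false; true; false; false].
split; [ rewrite /Wd (nseqSr n1) (nseq_split21 m2); by norm | by [] | by [] | by [] | by [] ].
Qed.

Lemma leaf55 (c d : T) (n1 m2 m4 n5 n6 n7 n8 n9 : nat) : core_goal c d n1 (m2.+2) (1) (m4.+2) n5 n6 n7 n8 n9.
Proof.
exists ((nseq (n1).+1 c) ++ [:: d] ++ nseq m2 d), ([:: d]), ([::]), (nseq m4 d), ([:: d] ++ [:: d] ++ [:: c]), (nseq n5 c ++ (nseq (n6).+1 d) ++ (nseq (n7).+1 c) ++ (nseq (n8).+1 d) ++ (nseq (n9).+1 c)), [:: [:: d; c; c; d]], [:: false; false; true; false; true; true; false; false].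
split; [ rewrite /Wd (nseq_split12 m2) (nseq_split12 m4); by norm | by [] | by [] | by [] | by [] ].
Qed.

Lemma leaf56 (c d : T) (n1 m2 m3 n5 n6 n7 n8 n9 : nat) : core_goal c d n1 (m2.+2) (m3.+2) (0) n5 n6 n7 n8 n9.
Proof.
exists (nseq n1 c), ([:: c]), (nseq m2 d ++ [:: d]), (nseq m3 c), ([:: c] ++ [:: c] ++ [:: d] ++ [:: c]), (nseq n5 c ++ (nseq (n6).+1 d) ++ (nseq (n7).+1 c) ++ (nseq (n8).+1 d) ++ (nseq (n9).+1 c)), [:: [:: d; d; c]], [:: true; true; false; true; false; false; true; true].
split; [ rewrite /Wd (nseqSr n1) (nseq_split03 m2) (nseq_split12 m3); by norm | by [] | by [] | by [] | by [] ].
Qed.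

Lemma leaf57 (c d : T) (n1 m2 m3 n5 n6 n7 n8 n9 : nat) : core_goal c d n1 (m2.+2) (m3.+2) (1) n5 n6 n7 n8 n9.
Proof.
exists (nseq n1 c), ([:: c] ++ [:: d] ++ [:: d]), (nseq m2 d), (nseq m3 c), ([:: c] ++ [:: d] ++ [:: d]), ((nseq (n5).+1 c) ++ (nseq (n6).+1 d) ++ (nseq (n7).+1 c) ++ (nseq (n8).+1 d) ++ (nseq (n9).+1 c)), [:: [:: d]; [:: c; c]], [:: true; false; false; true; true; false; true; false; false].
split; [ rewrite /Wd (nseqSr n1) (nseq_split21 m2) (nseq_split21 m3); by norm | by [] | by [] | by [] | by [] ].
Qed.

Lemma leaf58 (c d : T) (n1 m2 m3 m4 n5 n6 n7 n8 n9 : nat) : core_goal c d n1 (m2.+2) (m3.+2) (m4.+2) n5 n6 n7 n8 n9.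
Proof.
exists ((nseq (n1).+1 c) ++ [:: d] ++ nseq m2 d), ([:: d] ++ [:: d]), (nseq m3 c ++ [:: c]), (nseq m4 d), ([:: d] ++ [:: d] ++ [:: c]), (nseq n5 c ++ (nseq (n6).+1 d) ++ (nseq (n7).+1 c) ++ (nseq (n8).+1 d) ++ (nseq (n9).+1 c)), [:: [:: c]; [:: c; d]], [:: false; false; true; true; false; true; false; false].
split; [ rewrite /Wd (nseq_split12 m2) (nseq_split03 m3) (nseq_split12 m4); by norm | by [] | by [] | by [] | by [] ].
Qed.


Lemma core (c d : T) n1 n2 n3 n4 n5 n6 n7 n8 n9 : core_goal c d n1 n2 n3 n4 n5 n6 n7 n8 n9.
Proof.
case: n2 => [|[|m2]].
- 
  case: n3 => [|[|m3]].
  - 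
    case: n4 => [|[|m4]].
    - 
      case: n5 => [|[|m5]].
      - 
        case: n7 => [|[|m7]].
        - 
          case: n6 => [|[|m6]].
          - 
            exact: leaf0.
          - 
            exact: leaf1.
          - 
            exact: leaf2.
        - 
          exact: leaf3.
        - 
          exact: leaf4.
      - 
        case: n6 => [|[|m6]].
        - 
          exact: leaf5.
        - 
          exact: leaf6.
        - 
          exact: leaf7.
      - 
        exact: leaf8.
    - 
      case: n5 => [|[|m5]].
      - 
        case: n6 => [|[|m6]].
        - 
          exact: leaf9.
        - 
          exact: leaf10.
        - 
          exact: leaf11.
      - 
        exact: leaf12.
      - 
        exact: leaf13.
    - 
      case: n5 => [|[|m5]].
      - 
        exact: leaf14.
      - 
        exact: leaf15.
      - 
        exact: leaf16.
  - 
    case: n4 => [|[|m4]].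
    - 
      case: n5 => [|[|m5]].
      - 
        case: n6 => [|[|m6]].
        - 
          exact: leaf17.
        - 
          exact: leaf18.
        - 
          exact: leaf19.
      - 
        exact: leaf20.
      - 
        exact: leaf21.
    - 
      case: n5 => [|[|m5]].
      - 
        exact: leaf22.
      - 
        exact: leaf23.
      - 
        exact: leaf24.
    - 
      exact: leaf25.
  - 
    case: n4 => [|[|m4]].
    - 
      case: n5 => [|[|m5]].
      - 
        exact: leaf26.
      - 
        exact: leaf27.
      - 
        exact: leaf28.
    - 
      exact: leaf29.
    - 
      exact: leaf30.
- 
  case: n3 => [|[|m3]].
  - 
    case: n4 => [|[|m4]].
    - 
      case: n5 => [|[|m5]].
      - 
        case: n6 => [|[|m6]].
        - 
          exact: leaf31.
        - 
          exact: leaf32.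
        - 
          exact: leaf33.
      - 
        exact: leaf34.
      - 
        exact: leaf35.
    - 
      case: n5 => [|[|m5]].
      - 
        exact: leaf36.
      - 
        exact: leaf37.
      - 
        exact: leaf38.
    - 
      exact: leaf39.
  - 
    case: n4 => [|[|m4]].
    - 
      case: n5 => [|[|m5]].
      - 
        exact: leaf40.
      - 
        exact: leaf41.
      - 
        exact: leaf42.
    - 
      exact: leaf43.
    - 
      exact: leaf44.
  - 
    case: n4 => [|[|m4]].
    - 
      exact: leaf45.
    - 
      exact: leaf46.
    - 
      exact: leaf47.
- 
  case: n3 => [|[|m3]].
  - 
    case: n4 => [|[|m4]].
    - 
      case: n5 => [|[|m5]].
      - 
        exact: leaf48.
      - 
        exact: leaf49.
      - 
        exact: leaf50.
    - 
      exact: leaf51.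
    - 
      exact: leaf52.
  - 
    case: n4 => [|[|m4]].
    - 
      exact: leaf53.
    - 
      exact: leaf54.
    - 
      exact: leaf55.
  - 
    case: n4 => [|[|m4]].
    - 
      exact: leaf56.
    - 
      exact: leaf57.
    - 
      exact: leaf58.
Qed.
End Core.

Section Main.
Variable T : eqType.

Lemma flatten_filter_ne (l : seq (seq T)) :
  flatten (filter (fun B => B != [::]) l) = flatten l.
Proof. by elim: l => //= B l IH; case: B => //=; rewrite IH. Qed.

Lemma br_lemma (w A Y G1 G2 X B : seq T) (bl : seq (seq T)) :
  w = A ++ Y ++ G1 ++ flatten bl ++ G2 ++ X ++ B -> Y != [::] ->
  all (fun B => B != [::]) bl ->
  num_pal_factors (X ++ flatten (rev bl) ++ Y) < size (X ++ flatten (rev bl) ++ Y) ->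
  exists v, in_BR v w /\ ~~ rich v.
Proof.
move=> ew nY _ nr.
set l := [:: A; Y ++ G1] ++ bl ++ [:: G2 ++ X; B].
exists (flatten (rev (filter (fun B => B != [::]) l))); split.
  exists (filter (fun B => B != [::]) l); split => //.
  - apply/eqP => e.
    have : Y ++ G1 \in filter (fun B => B != [::]) l.
      by rewrite mem_filter -size_eq0 size_cat addn_eq0 size_eq0 (negbTE nY) /= !inE eqxx orbT.
    by rewrite e.
  - by apply/allP => x; rewrite mem_filter => /andP [].
  - by rewrite flatten_filter_ne /l /= !flatten_cat /= !cats0 ew -!catA.
rewrite -filter_rev flatten_filter_ne /l !rev_cat /= !flatten_cat /= !cats0.
rewrite (_ : _ ++ _ = (B ++ G2) ++ (X ++ flatten (rev bl) ++ Y) ++ (G1 ++ A)); last first.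
  by rewrite -!catA.
exact: not_rich_inf.
Qed.

Lemma rle_flat (w : seq T) : flatten [seq nseq p.2 p.1 | p <- rle w] = w.
Proof.
elim: w => //= x w; case: (rle w) => [|[y n] r] /= IH.
  by rewrite -IH.
by case: (x =P y) => [->|_] /=; rewrite -IH.
Qed.

Lemma rle_pos (w : seq T) : all (fun p => 0 < p.2) (rle w).
Proof.
elim: w => //= x w; case: (rle w) => [|[y n] r] //= IH.
by move: IH => /= /andP [h1 h2]; case: ifP => _ /=; rewrite ?h1 ?h2.
Qed.

Lemma rle_alt (w : seq T) : sorted (fun p q => p.1 != q.1) (rle w).
Proof.
elim: w => //= x w; case: (rle w) => [|[y n] r] //= IH.
case: (x =P y) => [_|/eqP ne] /=; last by rewrite ne.
by case: r IH.
Qed.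

Lemma rle_mem (w : seq T) p : p \in rle w -> p.1 \in w.
Proof.
move=> pin; rewrite -(rle_flat w); apply/flattenP.
exists (nseq p.2 p.1); first by apply/mapP; exists p.
have := allP (rle_pos w) p pin; case: p {pin} => x [|n] //= _.
by rewrite inE eqxx.
Qed.

Lemma main_aux (a b : T) (w : seq T) :
  a != b ->
  all (fun x => (x == a) || (x == b)) w ->
  9 <= run_len w ->
  exists v : seq T, in_BR v w /\ ~~ rich v.
Proof.
move=> ab wab; rewrite /run_len.
have fl := rle_flat w.
have pos := rle_pos w.
have alt := rle_alt w.
have mem : forall p, p \in rle w -> (p.1 == a) || (p.1 == b).
  by move=> p /rle_mem; apply: (allP wab).
case: (rle w) fl pos alt mem => [|[l1 [|n1]] [|[l2 [|n2]] [|[l3 [|n3]] [|[l4 [|n4]] [|[l5 [|n5]] [|[l6 [|n6]] [|[l7 [|n7]] [|[l8 [|n8]] [|[l9 [|n9]] r]]]]]]]]] //=; rewrite ?andbF //.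
move=> fl _ /andP [e12 /andP [e23 /andP [e34 /andP [e45 /andP [e56 /andP [e67 /andP [e78 /andP [e89 _]]]]]]]] mem _.
have ab3 : forall x y z : T, (x == a) || (x == b) -> (y == a) || (y == b) -> (z == a) || (z == b) ->
   x != y -> y != z -> z = x.
  move=> x y z /orP [] /eqP -> /orP [] /eqP -> /orP [] /eqP -> //; rewrite ?eqxx //.
have M1 := mem (l1, n1.+1); have M2 := mem (l2, n2.+1); have M3 := mem (l3, n3.+1).
have M4 := mem (l4, n4.+1); have M5 := mem (l5, n5.+1); have M6 := mem (l6, n6.+1).
have M7 := mem (l7, n7.+1); have M8 := mem (l8, n8.+1); have M9 := mem (l9, n9.+1).
rewrite /= !inE !eqxx ?orbT in M1 M2 M3 M4 M5 M6 M7 M8 M9.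
move: (M1 isT) (M2 isT) (M3 isT) (M4 isT) (M5 isT) (M6 isT) (M7 isT) (M8 isT) (M9 isT) => {M1 M2 M3 M4 M5 M6 M7 M8 M9} M1 M2 M3 M4 M5 M6 M7 M8 M9.
have E3 := ab3 _ _ _ M1 M2 M3 e12 e23.
have E4 := ab3 _ _ _ M2 M3 M4 e23 e34.
have E5 := ab3 _ _ _ M3 M4 M5 e34 e45.
have E6 := ab3 _ _ _ M4 M5 M6 e45 e56.
have E7 := ab3 _ _ _ M5 M6 M7 e56 e67.
have E8 := ab3 _ _ _ M6 M7 M8 e67 e78.
have E9 := ab3 _ _ _ M7 M8 M9 e78 e89.
rewrite E9 E8 E7 E6 E5 E4 E3 in fl.
have [A [Y [G1 [G2 [X [B [bl [ub [eW nY nbl eu nr]]]]]]]]] := core l1 l2 n1 n2 n3 n4 n5 n6 n7 n8 n9.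
apply: (@br_lemma w A Y G1 G2 X (B ++ flatten [seq nseq p.2 p.1 | p <- r]) bl) => //.
- transitivity (Wd l1 l2 n1 n2 n3 n4 n5 n6 n7 n8 n9 ++ flatten [seq nseq p.2 p.1 | p <- r]).
    by rewrite -fl /Wd -!catA.
  by rewrite eW -!catA.
- rewrite eu size_map npf_map //.
  by move=> x y; case: x; case: y => //= /eqP; rewrite ?(negbTE e12) // eq_sym (negbTE e12).
Qed.
End Main.

Theorem mainTheorem7 (T : eqType) (a b : T) (w : seq T) :
  a != b ->
  all (fun x => (x == a) || (x == b)) w ->
  9 <= run_len w ->
  exists v : seq T, in_BR v w /\ ~~ rich v.
Proof. exact: main_aux. Qed.
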